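(* Let $\mathbb{M}\subset\mathbb{T}^d$ be Lebesgue measurable and let $\mathbf{a}\in\mathbb{R}^d$ satisfy $\Lambda_{\mathbb{M}}(\mathbf{a})>0$. Then there exist $c>0$ and $\epsilon>0$ such that $\Lambda_{\mathbb{M}}(\lambda\mathbf{a})\ge c\lambda$ for all $0<\lambda<\epsilon$.
   Context: $\mathbb{T}^d=(\mathbb{R}/2\pi\mathbb{Z})^d$ with Lebesgue measure $|\cdot|$. For $\mathbf{a}\in\mathbb{R}^d$, $\mathbb{M}+\mathbf{a}$ is the translate of $\mathbb{M}$ (mod $2\pi$ in each coordinate), and $\Lambda_{\mathbb{M}}(\mathbf{a})=|\mathbb{M}\setminus(\mathbb{M}+\mathbf{a})|$. *)

(* Defs.v *)
From HB Require Import structures.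
From mathcomp Require Import all_boot all_order all_algebra.
From mathcomp Require Import all_classical all_reals all_analysis.

Set Implicit Arguments.
Unset Strict Implicit.
Unset Printing Implicit Defensive.
Import Order.TTheory GRing.Theory Num.Theory.
Import numFieldNormedType.Exports.

Local Open Scope classical_set_scope.
Local Open Scope ring_scope.

(* Points of R^d are d-tuples of reals; [d.-tuple R] carries MathComp-Analysis'
   product (= Borel) sigma-algebra generated by the coordinate projections. *)

Definition tsub (R : realType) (d : nat) (x y : d.-tuple R) : d.-tuple R :=
  [tuple tnth x i - tnth y i | i < d].

Definition tscale (R : realType) (d : nat) (l : R) (x : d.-tuple R) : d.-tuple R :=
  [tuple l * tnth x i | i < d].

(* mu is the d-dimensional Lebesgue measure on the Borel sets of R^d:
   it gives every half-open box its volume (this determines mu uniquely). *)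
Definition is_lebesgue (R : realType) (d : nat)
    (mu : {measure set (d.-tuple R) -> \bar R}) : Prop :=
  forall a b : d.-tuple R, (forall i, tnth a i <= tnth b i) ->
    mu [set x | forall i, tnth a i <= tnth x i < tnth b i] =
    (\prod_(i < d) (tnth b i - tnth a i))%:E.

(* A subset of the torus T^d = (R/2piZ)^d is represented by its
   (2pi Z^d)-periodic lift to R^d. *)
Definition torus_set (R : realType) (d : nat) (M : set (d.-tuple R)) : Prop :=
  forall x y : d.-tuple R,
    (forall i, exists k : int, tnth x i - tnth y i = 2 * pi * k%:~R) ->
    (M x <-> M y).

Definition leb_measurable (R : realType) (d : nat)
    (mu : {measure set (d.-tuple R) -> \bar R}) (M : set (d.-tuple R)) : Prop :=
  ((mu^*)%mu).-caratheodory M.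

Definition translate (R : realType) (d : nat) (M : set (d.-tuple R))
    (a : d.-tuple R) : set (d.-tuple R) :=
  [set x | M (tsub x a)].

Definition fund_dom (R : realType) (d : nat) : set (d.-tuple R) :=
  [set x | forall i, 0 <= tnth x i < 2 * pi].

(* Lambda_M(a) = |M \ (M + a)|, the Lebesgue measure on T^d *)
Definition Lambda (R : realType) (d : nat)
    (mu : {measure set (d.-tuple R) -> \bar R}) (M : set (d.-tuple R))
    (a : d.-tuple R) : \bar R :=
  (mu^*)%mu (@fund_dom R d `&` (M `\` translate M a)).

(* Main.v *)
Require Import Defs.
From HB Require Import structures.
From mathcomp Require Import all_boot all_order all_algebra.
From mathcomp Require Import all_classical all_reals all_analysis.
From mathcomp Require Import measurable_realfun.
From mathcomp Require Import ring lra.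
Import Order.TTheory GRing.Theory Num.Theory.
Import numFieldNormedType.Exports.
Local Open Scope classical_set_scope.
Local Open Scope ring_scope.
Set Implicit Arguments.
Unset Strict Implicit.

Section S.
Variables (R : realType) (d : nat).
Local Notation T := (d.-tuple R).

Definition tadd (x y : T) : T := [tuple tnth x i + tnth y i | i < d].
Definition box (a b : T) : set T := [set x | forall i, tnth a i <= tnth x i < tnth b i].
Definition hsp (i : 'I_d) (c : R) : set T := [set x | tnth x i < c].

Lemma tnth_tsub (x y : T) i : tnth (tsub x y) i = tnth x i - tnth y i.
Proof. by rewrite tnth_mktuple. Qed.
Lemma tnth_tadd (x y : T) i : tnth (tadd x y) i = tnth x i + tnth y i.
Proof. by rewrite tnth_mktuple. Qed.

Lemma measurable_hsp i c : measurable (hsp i c).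
Proof.
have := @measurable_tnth _ R d i measurableT `]-oo, c[%classic (measurable_itv _).
rewrite setTI; congr measurable; apply/seteqP; split => x /=;
  by rewrite in_itv.
Qed.

Lemma measurable_box a b : measurable (box a b).
Proof.
have -> : box a b = \bigcap_(i in [set: 'I_d])
   ((@tnth d R ^~ i) @^-1` `[tnth a i, tnth b i[%classic).
  apply/seteqP; split => x /= H i.
    move=> _; rewrite /preimage /= in_itv /=; exact: H.
  have := H i I; rewrite /preimage /= in_itv /=; exact.
apply: fin_bigcap_measurable => // i _.
have := @measurable_tnth _ R d i measurableT _ (measurable_itv `[tnth a i, tnth b i[).
by rewrite setTI.
Qed.

Lemma measurable_tsub (b : T) : measurable_fun setT (fun x : T => tsub x b).
Proof.
apply/measurable_fun_tnthP => i.
have -> : (@tnth d R ^~ i \o (fun x : T => tsub x b)) = (fun x : T => tnth x i - tnth b i).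
  by apply/funext => x /=; rewrite tnth_tsub.
apply: measurable_funB; last exact: measurable_cst.
exact: measurable_tnth.
Qed.

Lemma measurable_translate (A : set T) b : measurable A -> measurable (translate A b).
Proof.
move=> mA; have := @measurable_tsub b measurableT A mA.
by rewrite setTI.
Qed.


Definition boxG : set (set T) := [set B | exists a b, B = box a b].
Definition tlo (k : nat) : T := [tuple - (k%:R) | j < d].
Definition thi (i : 'I_d) (c : R) (k : nat) : T :=
  [tuple if j == i then c else k%:R | j < d].

Lemma hsp_bigcup i c : hsp i c = \bigcup_k box (tlo k) (thi i c k).
Proof.
apply/seteqP; split => x /=; last first.
  by move=> [k _ /(_ i)]; rewrite !tnth_mktuple eqxx => /andP[].
move=> xi; exists (Num.truncn (\sum_(j < d) `|tnth x j|)).+1 => //= j.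
have hj : `|tnth x j| < (Num.truncn (\sum_(j < d) `|tnth x j|)).+1%:R.
  apply: le_lt_trans (truncnS_gt _).
  rewrite (bigD1 j) //= lerDl sumr_ge0 // => k _.
move: hj; rewrite ltr_norml => /andP[h1 h2].
rewrite !tnth_mktuple (ltW h1) /=.
by case: eqP => [->|].
Qed.

Lemma measurable_sub_boxG : (measurable : set (set T)) `<=` <<s boxG >>.
Proof.
apply: smallest_sub; first exact: smallest_sigma_algebra.
move=> B; rewrite -bigcup_seq => -[i _ [A mA <-]].
have : ((@RGenInftyO.G R).-sigma.-measurable A) by rewrite -RGenInftyO.measurableE.
move: A {mA}; apply: smallest_sub.
  split.
  - by rewrite preimage_set0 setI0; exact: sigma_algebra0.
  - move=> A hA; rewrite setTI setTD preimage_setC; apply: sigma_algebraC.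
    by rewrite setTI in hA.
  - move=> F hF; rewrite preimage_bigcup setI_bigcupr; apply: sigma_algebra_bigcup.
    by move=> n; apply: hF.
move=> _ [c ->]; rewrite setTI.
have -> : (fun x : T => tnth x i) @^-1` `]-oo, c[%classic = hsp i c.
  by apply/seteqP; split => x /=; rewrite in_itv.
rewrite hsp_bigcup; apply: sigma_algebra_bigcup => k.
by apply: sub_sigma_algebra; exists (tlo k), (thi i c k).
Qed.

Lemma measurable_boxG : (measurable : set (set T)) = <<s boxG >>.
Proof.
apply/seteqP; split; first exact: measurable_sub_boxG.
apply: smallest_sub; first exact: sigma_algebra_measurable.
by move=> _ [a [b ->]]; exact: measurable_box.
Qed.


Lemma box_translate a b c : translate (box a b) c = box (tadd a c) (tadd b c).
Proof.
apply/seteqP; split => x /= H i; have := H i; rewrite !tnth_mktuple => /andP[h1 h2];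
  apply/andP; split; lra.
Qed.

Lemma box_empty a b i : tnth b i < tnth a i -> box a b = set0.
Proof.
move=> h; apply/seteqP; split => x //= /(_ i) /andP[h1 h2]; lra.
Qed.

Definition tcube (k : R) : T := [tuple k | j < d].

Lemma cube_cover : \bigcup_k box (tlo k) (tcube k%:R) = setT.
Proof.
apply/seteqP; split => x // _.
exists (Num.truncn (\sum_(j < d) `|tnth x j|)).+1 => //= j.
have hj : `|tnth x j| < (Num.truncn (\sum_(j < d) `|tnth x j|)).+1%:R.
  apply: le_lt_trans (truncnS_gt _).
  rewrite (bigD1 j) //= lerDl sumr_ge0 // => k _.
move: hj; rewrite ltr_norml => /andP[h1 h2].
by rewrite !tnth_mktuple (ltW h1) h2.
Qed.

Variable mu : {measure set T -> \bar R}.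
Hypothesis hlb : is_lebesgue mu.

Lemma mu_box_translate a b c : mu (translate (box a b) c) = mu (box a b).
Proof.
rewrite box_translate.
have [hab|] := pselect (forall i, tnth a i <= tnth b i).
  rewrite !hlb //; last by move=> i; rewrite !tnth_mktuple lerD2r.
  congr (_%:E); apply: eq_bigr => i _; rewrite !tnth_mktuple; ring.
move=> /existsNP [i /negP]; rewrite -ltNge => h.
rewrite (box_empty h) (@box_empty (tadd a c) (tadd b c) i) ?measure0 //.
by rewrite !tnth_mktuple ltrD2r.
Qed.

Lemma mu_translate (A : set T) c : measurable A -> mu (translate A c) = mu A.
Proof.
move=> mA.
have := @measure_unique _ R T boxG (fun k => box (tlo k) (tcube k%:R))
  measurable_boxG _ _ cube_cover mu (pushforward mu (fun x => tsub x c)).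
move=> /(_ _ _ (measurable_tsub c) _ _ A mA) HU.
rewrite (_ : mu (translate A c) = pushforward mu (fun x => tsub x c) A) //.
rewrite -HU //.
- move=> _ _ [a [b ->]] [a' [b' ->]].
  exists [tuple Num.max (tnth a i) (tnth a' i) | i < d].
  exists [tuple Num.min (tnth b i) (tnth b' i) | i < d].
  apply/seteqP; split => x /=.
    move=> [H1 H2] i; rewrite !tnth_mktuple.
    move: (H1 i) (H2 i) => /andP[h1 h2] /andP[h3 h4].
    by rewrite ge_max lt_min h1 h2 h3 h4.
  move=> H; split => i; move: (H i); rewrite !tnth_mktuple ge_max lt_min;
    by case/andP => /andP[? ?] /andP[? ?]; apply/andP.
- by move=> k; exists (tlo k), (tcube k%:R).
- by move=> _ [a [b ->]]; rewrite /pushforward; symmetry; exact: mu_box_translate.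
- move=> k; rewrite hlb; first exact: ltry.
  by move=> i; rewrite !tnth_mktuple; have := ler0n R k; lra.

Qed.

Definition tneg (c : T) : T := [tuple - tnth c i | i < d].

Lemma translate_translate (X : set T) b c :
  translate (translate X b) c = translate X (tadd b c).
Proof.
rewrite /translate /=; apply/seteqP; split => x /=;
  congr (X _); apply: eq_from_tnth => i; rewrite !tnth_mktuple; ring.
Qed.

Lemma translate0 (X : set T) : translate X [tuple 0 | i < d] = X.
Proof.
apply/seteqP; split => x /=; congr (X _); apply: eq_from_tnth => i;
  rewrite !tnth_mktuple; ring.
Qed.

Lemma translateK (X : set T) c : translate (translate X c) (tneg c) = X.
Proof.
rewrite translate_translate -[RHS]translate0; congr translate.
by apply: eq_from_tnth => i; rewrite !tnth_mktuple; ring.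
Qed.

Local Open Scope measure_scope.

Lemma mu_ext_translate_le (X : set T) c : (mu^* (translate X c) <= mu^* X)%E.
Proof.
apply: le_ereal_inf_tmp => _ [F [mF XF] <-]; apply: ereal_inf_lbound.
exists (fun k => translate (F k) c).
  split; first by move=> k; exact: measurable_translate.
  by move=> x /XF [k _ Fk]; exists k.
by apply: eq_eseriesr => k _; exact: mu_translate.
Qed.

Lemma mu_ext_translate (X : set T) c : mu^* (translate X c) = mu^* X.
Proof.
apply/le_anti; rewrite mu_ext_translate_le /=.
by rewrite -{1}(translateK X c) mu_ext_translate_le.
Qed.

End S.



Section S2.
Variables (R : realType) (d : nat).
Local Notation T := (d.-tuple R).
Variable mu : {measure set T -> \bar R}.
Hypothesis hlb : is_lebesgue mu.

Definition Dc (c : T) : set T := [set x | forall i, 0 <= tnth x i + tnth c i < 2 * pi].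
Definition ej (j : 'I_d) (s : R) : T := [tuple if i == j then s else 0 | i < d].

Local Open Scope measure_scope.

Lemma cara_hsp j c (X : set T) :
  mu^* X = (mu^* (X `&` hsp j c) + mu^* (X `&` ~` hsp j c))%E.
Proof.
have := @caratheodory_measurable_mu_ext _ R T mu (hsp j c) (measurable_hsp j c).
by apply.
Qed.

Lemma Dc_int_shift (P : set T) (hP : torus_set P) c j (k : int) :
  Dc (tadd c (ej j (2 * pi * k%:~R))) `&` P =
  translate (Dc c `&` P) (ej j (- (2 * pi * k%:~R))).
Proof.
apply/seteqP; split => x /= [H1 H2]; split.
- move=> i; have := H1 i; rewrite /= ?tnth_mktuple.
  by case: eqP => _; lra.
- apply: (proj1 (hP x _ _)) H2 => i; rewrite /= ?tnth_mktuple.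
  by case: eqP => _; [exists (- k); rewrite mulrNz; ring | exists 0; rewrite mulr0z; ring].
- move=> i; have := H1 i; rewrite /= ?tnth_mktuple.
  by case: eqP => _; lra.
- apply: (proj1 (hP _ x _)) H2 => i; rewrite /= ?tnth_mktuple.
  by case: eqP => _; [exists k; ring | exists 0; rewrite mulr0z; ring].
Qed.

Lemma notlt (x y : R) : ~ (x < y) -> y <= x.
Proof. by move/negP; rewrite -leNgt. Qed.
Lemma lt_not (x y : R) : y <= x -> ~ (x < y).
Proof. by rewrite leNgt => /negP. Qed.

Lemma Dc_shift_small (P : set T) (hP : torus_set P) c j s : 0 <= s < 2 * pi ->
  mu^* (Dc (tadd c (ej j s)) `&` P) = mu^* (Dc c `&` P).
Proof.
move=> /andP[s0 s2].
set L := Dc (tadd c (ej j s)) `&` P.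
set Q := Dc c `&` P.
rewrite (cara_hsp j (- tnth c j) L) (cara_hsp j (2 * pi - s - tnth c j) Q).
have E1 : L `&` ~` hsp j (- tnth c j) = Q `&` hsp j (2 * pi - s - tnth c j).
  rewrite /hsp; apply/seteqP; split => x /= [[H1 H2] H3].
    have H4 := notlt H3.
    split; [split => // i|].
      by have := H1 i; rewrite /= ?tnth_mktuple; case: eqP => [->|_]; rewrite ?eqxx; lra.
    by have := H1 j; rewrite /= ?tnth_mktuple ?eqxx; lra.
  split; [split => // i|].
    by have := H1 i; rewrite /= ?tnth_mktuple; case: eqP => [->|_]; rewrite ?eqxx; lra.
  by apply: lt_not; have := H1 j; rewrite /= ?tnth_mktuple; lra.
have E2 : Q `&` ~` hsp j (2 * pi - s - tnth c j) =
          translate (L `&` hsp j (- tnth c j)) (ej j (2 * pi)).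
  rewrite /hsp; apply/seteqP; split => y /= [[H1 H2] H3].
    have H4 := notlt H3.
    split; [split|].
    - move=> i; have := H1 i; rewrite /= ?tnth_mktuple; case: eqP => [->|_].
        by rewrite ?eqxx; lra.
      by lra.
    - apply: (proj1 (hP y _ _)) H2 => i; rewrite /= ?tnth_mktuple.
      by case: eqP => _; [exists 1; ring | exists 0; rewrite mulr0z; ring].
    - by have := H1 j; rewrite /= ?tnth_mktuple ?eqxx; lra.
  have H5 := H1 j; rewrite /= ?tnth_mktuple ?eqxx in H5 H3.
  split; [split|].
  - move=> i; have := H1 i; rewrite /= ?tnth_mktuple; case: eqP => [->|_].
      by rewrite ?eqxx; lra.
    by lra.
  - apply: (proj1 (hP _ y _)) H2 => i; rewrite /= ?tnth_mktuple.
    by case: eqP => _; [exists (-1); rewrite mulrNz; ring | exists 0; rewrite mulr0z; ring].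
  - by apply: lt_not; lra.
by rewrite E1 E2 mu_ext_translate // addeC.
Qed.

Lemma Dc_shift (P : set T) (hP : torus_set P) c j s :
  mu^* (Dc (tadd c (ej j s)) `&` P) = mu^* (Dc c `&` P).
Proof.
have pi0 := pi_gt0 R.
have p0 : 0 < 2 * pi :> R by lra.
set k := Num.floor (s / (2 * pi)).
have /andP[k1 k2] := Num.Theory.floor_itv (s / (2 * pi)).
rewrite ler_pdivlMr // in k1; rewrite intrD1 ltr_pdivrMr // in k2.
have -> : tadd c (ej j s) = tadd (tadd c (ej j (2 * pi * k%:~R))) (ej j (s - 2 * pi * k%:~R)).
  apply: eq_from_tnth => i; rewrite !tnth_mktuple.
  by case: eqP => _; ring.
rewrite Dc_shift_small //; last by apply/andP; split; lra.
by rewrite Dc_int_shift // mu_ext_translate.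
Qed.

Lemma Dc_all (P : set T) (hP : torus_set P) c :
  mu^* (Dc c `&` P) = mu^* (Dc [tuple 0 | i < d] `&` P).
Proof.
pose cp (n : nat) : T := [tuple if (i < n)%N then tnth c i else 0 | i < d].
have H n : mu^* (Dc (cp n) `&` P) = mu^* (Dc (cp 0) `&` P).
  elim: n => // n IH; rewrite -IH.
  case hn : (n < d)%N.
    pose j := Ordinal hn.
    have -> : cp n.+1 = tadd (cp n) (ej j (tnth c j)).
      apply: eq_from_tnth => i; rewrite !tnth_mktuple.
      have -> : (i == j) = (nat_of_ord i == n) by [].
      rewrite ltnS leq_eqVlt.
      case: (ltngtP i n) => h /=.
      - by rewrite addr0.
      - by rewrite addr0.
      - by rewrite add0r; congr tnth; apply: val_inj.
    exact: Dc_shift.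
  have -> // : cp n.+1 = cp n.
  apply: eq_from_tnth => i; rewrite !tnth_mktuple.
  have hi : (i < n)%N.
    by apply: leq_trans (ltn_ord i) _; rewrite leqNgt hn.
  by rewrite hi (ltn_trans hi (ltnSn n)).
have E0 : cp 0%N = [tuple 0 | i < d].
  by apply: eq_from_tnth => i; rewrite !tnth_mktuple.
rewrite -E0 -(H d); congr (mu^* (Dc _ `&` P)).
by apply: eq_from_tnth => i; rewrite !tnth_mktuple ltn_ord.
Qed.

Lemma periodic_inv (P : set T) (hP : torus_set P) c :
  mu^* (@fund_dom R d `&` translate P c) = mu^* (@fund_dom R d `&` P).
Proof.
have -> : @fund_dom R d `&` translate P c = translate (Dc c `&` P) c.
  apply/seteqP; split => x /= [H1 H2]; split => // i; have := H1 i;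
    rewrite /= ?tnth_mktuple; by rewrite subrK.
rewrite mu_ext_translate // Dc_all //.
congr (mu^* _); apply/seteqP; split => x /= [H1 H2]; split => // i;
  have := H1 i; rewrite /= ?tnth_mktuple; by rewrite addr0.
Qed.

End S2.



Section S3.
Variables (R : realType) (d : nat).
Local Notation T := (d.-tuple R).
Variable mu : {measure set T -> \bar R}.
Hypothesis hlb : is_lebesgue mu.

Definition sdiff (A B : set T) := (A `\` B) `|` (B `\` A).

Inductive elem : set T -> Prop :=
| elem0 : elem set0
| elemH i c : elem (hsp i c)
| elemC U : elem U -> elem (~` U)
| elemU U V : elem U -> elem V -> elem (U `|` V).

Lemma elem_measurable U0 : elem U0 -> measurable U0.
Proof.
elim => //; first exact: measurable_hsp.
- by move=> U _ mU; exact: measurableC.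
- by move=> U V _ mU _ mV; exact: measurableU.
Qed.

Lemma measurable_sdiff A B : measurable A -> measurable B -> measurable (sdiff A B).
Proof. by move=> mA mB; apply: measurableU; apply: measurableD. Qed.

Definition kbox (r : R) : set T := box (@tcube R d (- r)) (@tcube R d r).

Lemma measurable_kbox r : measurable (kbox r).
Proof. exact: measurable_box. Qed.

Variable r : R.
Hypothesis r0 : 0 < r.

Definition contU (U : set T) := forall e : R, 0 < e -> exists2 del : R, 0 < del &
  forall b : T, (forall i, `|tnth b i| < del) ->
    (mu (kbox r `&` sdiff U (translate U b)) <= e%:E)%E.

Lemma sdiffC U V : sdiff (~` U) (~` V) = sdiff U V.
Proof.
apply/seteqP; split => x /=; rewrite /sdiff /=.
  by move=> [[h1 h2]|[h1 h2]]; [right|left]; split => //; apply/not_notP.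
by move=> [[h1 h2]|[h1 h2]]; [right|left]; split => // h; apply: h.
Qed.

Lemma contU_elem U0 : elem U0 -> contU U0.
Proof.
have rr : (0:R) < r := r0.
elim.
- move=> e e0; exists 1 => // b _.
  have -> : sdiff set0 (translate set0 b) = set0.
    by apply/seteqP; split => x //= [[]|[]].
  by rewrite setI0 measure0 lee_fin ltW.
- move=> i c e e0.
  pose Pr := \prod_(j < d | j != i) (r - - r).
  have Pr0 : 0 < Pr.
    apply: prodr_gt0 => j _; rewrite opprK; exact: addr_gt0.
  exists (e / (2 * Pr)); first by apply: divr_gt0 => //; lra.
  move=> b hb.
  set del := e / (2 * Pr).
  rewrite -/del in hb.
  pose lo : T := [tuple if j == i then c - del else - r | j < d].
  pose hi : T := [tuple if j == i then c + del else r | j < d].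
  have hlohi : forall j, tnth lo j <= tnth hi j.
    move=> j; rewrite !tnth_mktuple; case: eqP => _; last lra.
    have : 0 < del by rewrite /del; apply: divr_gt0 => //; lra.
    lra.
  apply: (@le_trans _ _ (mu (box lo hi))).
    apply: le_measure; rewrite ?inE.
    - apply: measurableI; first exact: measurable_kbox.
      apply: measurable_sdiff; first exact: measurable_hsp.
      apply: measurable_translate; exact: measurable_hsp.
    - exact: measurable_box.
    move=> x [hK hS] j; rewrite !tnth_mktuple.
    have := hK j; rewrite !tnth_mktuple => hKj.
    case: eqP => [->|_]; last lra.
    have := hb i; have := ler_norm (tnth b i); have := ler_norm (- tnth b i).
    rewrite normrN.
    move: hS; rewrite /sdiff /hsp /translate /= tnth_tsub.
    case=> [[h1 /negP]|[h1 /negP]]; rewrite -leNgt; lra.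
  rewrite hlb // lee_fin.
  rewrite (bigD1 i) //= !tnth_mktuple eqxx.
  rewrite (eq_bigr (fun => r - - r)); last first.
    by move=> j /negPf ji; rewrite !tnth_mktuple ji.
  rewrite -/Pr /del.
  have -> : c + e / (2 * Pr) - (c - e / (2 * Pr)) = e / Pr.
    by field; lra.
  by rewrite divfK //; lra.
- move=> U _ cU e e0; have [del del0 H] := cU e e0.
  exists del => // b hb; have -> : translate (~` U) b = ~` translate U b by [].
  by rewrite sdiffC; exact: H.
- move=> U V eU cU eV cV e e0.
  have e2 : 0 < e / 2 by lra.
  have [d1 d10 H1] := cU _ e2; have [d2 d20 H2] := cV _ e2.
  exists (Num.min d1 d2); first by rewrite lt_min d10 d20.
  move=> b hb.
  have mS W : elem W -> measurable (kbox r `&` sdiff W (translate W b)).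
    move=> eW; apply: measurableI; first exact: measurable_kbox.
    apply: measurable_sdiff; first exact: elem_measurable.
    apply: measurable_translate; exact: elem_measurable.
  apply: (@le_trans _ _ (mu ((kbox r `&` sdiff U (translate U b)) `|`
                            (kbox r `&` sdiff V (translate V b))))).
    apply: le_measure; rewrite ?inE.
    - by apply: mS; constructor.
    - by apply: measurableU; apply: mS.
    move=> x [hK hS]; move: hS; rewrite /sdiff /=.
    by move=> [[[hU|hV] h2]|[[hU|hV] h2]]; [left|right|left|right]; split => //;
      [left|left|right|right]; split => // ?; apply: h2; [left|right|left|right].
  apply: le_trans (measureU2 _ (mS _ eU) (mS _ eV)) _.
  rewrite (_ : e = e / 2 + e / 2); last by field.
  rewrite EFinD; apply: leeD.
  - by apply: H1 => i; have := hb i; rewrite lt_min => /andP[].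
  - by apply: H2 => i; have := hb i; rewrite lt_min => /andP[].
Qed.

Definition apprB (B : set T) := forall e : R, 0 < e -> exists U, elem U /\
  (mu (kbox r `&` sdiff B U) <= e%:E)%E.
Definition Cl : set (set T) := [set B | measurable B /\ apprB B].

Lemma elemT : elem setT.
Proof. rewrite -setC0; constructor; constructor. Qed.

Lemma elemI U V : elem U -> elem V -> elem (U `&` V).
Proof.
move=> eU eV; rewrite -(setCK U) -(setCK V) -setCU.
by do 3 constructor => //.
Qed.

Lemma elem_box a b : elem (box a b).
Proof.
have -> : box a b = \big[setI/setT]_(i <- index_enum 'I_d)
    (hsp i (tnth b i) `&` ~` hsp i (tnth a i)).
  rewrite -bigcap_seq; apply/seteqP; split => x /=.
    move=> H i _; have /andP[h1 h2] := H i; split => //.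
    by rewrite /hsp /=; apply/negP; rewrite -leNgt.
  move=> H i; have [h1 h2] := H i (mem_index_enum i).
  by apply/andP; split => //; move: h2; rewrite /hsp /= => /negP; rewrite -leNgt.
elim/big_ind: _ => //; first exact: elemT.
  by move=> U V; exact: elemI.
by move=> i _; apply: elemI; constructor; constructor.
Qed.

Lemma measure_kbox_lt : (mu (kbox r) < +oo)%E.
Proof.
have rr : (0:R) < r := r0.
rewrite /kbox hlb; first exact: ltry.
by move=> i; rewrite !tnth_mktuple; lra.
Qed.

Lemma Cl_U A B : Cl A -> Cl B -> Cl (A `|` B).
Proof.
move=> [mA aA] [mB aB]; split; first exact: measurableU.
move=> e e0; have e2 : 0 < e / 2 by lra.
have [U [eU hU]] := aA _ e2; have [V [eV hV]] := aB _ e2.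
exists (U `|` V); split; first by constructor.
have mS X W : measurable X -> elem W -> measurable (kbox r `&` sdiff X W).
  move=> mX eW; apply: measurableI; first exact: measurable_kbox.
  by apply: measurable_sdiff => //; exact: elem_measurable.
apply: (@le_trans _ _ (mu ((kbox r `&` sdiff A U) `|` (kbox r `&` sdiff B V)))).
  apply: le_measure; rewrite ?inE.
  - by apply: mS; [exact: measurableU | constructor].
  - by apply: measurableU; apply: mS.
  move=> x [hK hS]; move: hS; rewrite /sdiff /=.
  case=> [[[ha|hb] h2]|[[hu|hv] h2]].
  - by left; split => //; left; split => // ?; apply: h2; left.
  - by right; split => //; left; split => // ?; apply: h2; right.
  - by left; split => //; right; split => // ?; apply: h2; left.
  - by right; split => //; right; split => // ?; apply: h2; right.
apply: le_trans (measureU2 _ (mS _ _ mA eU) (mS _ _ mB eV)) _.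
rewrite (_ : e = e / 2 + e / 2); last by field.
by rewrite EFinD; apply: leeD.
Qed.

Lemma Cl_bigsetU (F : (set T)^nat) n : (forall k, Cl (F k)) ->
  Cl (\big[setU/set0]_(k < n) F k).
Proof.
move=> HF; elim: n => [|n IH].
  rewrite big_ord0; split; first exact: measurable0.
  move=> e e0; exists set0; split; first constructor.
  have -> : sdiff set0 set0 = set0 :> set T by apply/seteqP; split => x // [[]|[]].
  by rewrite setI0 measure0 lee_fin ltW.
by rewrite big_ord_recr /=; apply: Cl_U.
Qed.

Lemma Cl_bigcup (F : (set T)^nat) : (forall k, Cl (F k)) -> Cl (\bigcup_k F k).
Proof.
move=> HF; split.
  by apply: bigcupT_measurable => k; have [] := HF k.
move=> e e0; have e2 : 0 < e / 2 by lra.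
set B := \bigcup_k F k.
pose Bn n := \big[setU/set0]_(k < n) F k.
have mBn n : measurable (Bn n) by have [] := Cl_bigsetU n HF.
have mB : measurable B by apply: bigcupT_measurable => k; have [] := HF k.
pose G n := kbox r `&` (B `\` Bn n).
have mG n : measurable (G n).
  by apply: measurableI; [exact: measurable_kbox | exact: measurableD].
have BnB n : Bn n `<=` B.
  move=> x; rewrite /Bn -bigcup_mkord => -[k _ Fk]; by exists k.
have Bn_mono m n : (m <= n)%N -> Bn m `<=` Bn n.
  move=> mn x; rewrite /Bn -!bigcup_mkord => -[k /= km Fk]; exists k => //=.
  exact: leq_trans km mn.
have cvgG : (mu \o G) @ \oo --> mu (\bigcap_n G n).
  apply: nonincreasing_cvg_mu => //.
  - apply: le_lt_trans measure_kbox_lt; apply: le_measure; rewrite ?inE //.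
      exact: measurable_kbox.
    by move=> x [].
  - by apply: bigcapT_measurable.
  - move=> m n mn; apply/subsetPset => x [hK [hB hn]]; split => //; split => //.
    by move=> h; apply: hn; exact: (Bn_mono _ _ mn x h).
have E0 : \bigcap_n G n = set0.
  apply/seteqP; split => x // H.
  have [_ [[k _ Fk] _]] := H 0%N I.
  have [_ [_ nk]] := H k.+1 I; apply: nk.
  rewrite /Bn -bigcup_mkord; exists k => //=.
rewrite E0 measure0 in cvgG.
have := cvgG _ (@nbhs_open_ereal_lt R 0 (fun=> e / 2) e2).
case=> N _ HN.
have [U [eU hU]] := (Cl_bigsetU N HF).2 _ e2.
exists U; split => //.
have mS : measurable (kbox r `&` sdiff (Bn N) U).
  apply: measurableI; first exact: measurable_kbox.
  by apply: measurable_sdiff => //; exact: elem_measurable.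
apply: (@le_trans _ _ (mu (G N `|` (kbox r `&` sdiff (Bn N) U)))).
  apply: le_measure; rewrite ?inE //.
  - apply: measurableI; first exact: measurable_kbox.
    by apply: measurable_sdiff => //; exact: elem_measurable.
  - exact: measurableU.
  move=> x [hK hS]; move: hS; rewrite /sdiff /=.
  case=> [[hB hU']|[hU' hB]].
    have [hN|hN] := pselect (Bn N x).
      by right; split => //; left.
    by left; split => //; split.
  right; split => //; right; split => // hN; apply: hB; exact: BnB hN.
apply: le_trans (measureU2 _ (mG N) mS) _.
rewrite (_ : e = e / 2 + e / 2); last by field.
rewrite EFinD; apply: leeD => //.
by apply: ltW; apply: (HN N) => /=.
Qed.

Lemma Cl_sigma : sigma_algebra setT Cl.
Proof.
split.
- split; first exact: measurable0.
  move=> e e0; exists set0; split; first constructor.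
  have -> : sdiff set0 set0 = set0 :> set T by apply/seteqP; split => x // [[]|[]].
  by rewrite setI0 measure0 lee_fin ltW.
- move=> B [mB aB]; split; first by rewrite setTD; exact: measurableC.
  move=> e e0; have [U [eU hU]] := aB e e0.
  exists (~` U); split; first by constructor.
  apply: le_trans hU; apply: le_measure; rewrite ?inE.
  - apply: measurableI; first exact: measurable_kbox.
    apply: measurable_sdiff; first by rewrite setTD; exact: measurableC.
    by apply: measurableC; exact: elem_measurable.
  - apply: measurableI; first exact: measurable_kbox.
    by apply: measurable_sdiff => //; exact: elem_measurable.
  move=> x [hK hS]; split => //; move: hS; rewrite /sdiff /=.
  case=> [[[_ hB] /not_notP hU']|[hU' hB]].
    by right; split => //; apply/not_notP/not_notP.
  left; split => //; apply/not_notP => hB'; apply: hB; split => //.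
- exact: Cl_bigcup.
Qed.

Lemma measurable_appr B : measurable B -> apprB B.
Proof.
move=> mB.
suff : Cl B by case.
move: B mB; apply: (subset_trans (@measurable_sub_boxG R d)).
apply: smallest_sub; first exact: Cl_sigma.
move=> _ [a [b ->]]; split; first exact: measurable_box.
move=> e e0; exists (box a b); split; first exact: elem_box.
have -> : sdiff (box a b) (box a b) = set0 by apply/seteqP; split => x // [[]|[]].
by rewrite setI0 measure0 lee_fin ltW.
Qed.

End S3.



Section S4.
Variables (R : realType) (d : nat).
Local Notation T := (d.-tuple R).
Variable mu : {measure set T -> \bar R}.
Hypothesis hlb : is_lebesgue mu.

Variable r0 : R.
Hypothesis r00 : 0 < r0.

Lemma cont_meas (B : set T) : B `<=` kbox r0 -> measurable B ->
  forall e : R, 0 < e -> exists2 del : R, 0 < del & forall b : T,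
    (forall i, `|tnth b i| < del) -> (mu (B `\` translate B b) <= e%:E)%E.
Proof.
move=> BK mB e e0.
have rr : (0:R) < r0 := r00.
have r1 : (0:R) < r0 + 1 by lra.
have e3 : 0 < e / 3 by lra.
have [U [eU hU]] := measurable_appr hlb r1 mB e3.
have [del del0 hdel] := contU_elem hlb r1 eU e3.
exists (Num.min del 1); first by rewrite lt_min del0 ltr01.
move=> b hb.
have hb1 i : `|tnth b i| < del by have := hb i; rewrite lt_min => /andP[].
have hb2 i : `|tnth b i| < 1 by have := hb i; rewrite lt_min => /andP[].
set S1 := kbox (r0 + 1) `&` sdiff B U.
set S3 := kbox (r0 + 1) `&` sdiff U (translate U b).
have mU := elem_measurable eU.
have mS1 : measurable S1.
  by apply: measurableI; [exact: measurable_kbox | exact: measurable_sdiff].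
have mS3 : measurable S3.
  apply: measurableI; [exact: measurable_kbox | apply: measurable_sdiff => //].
  exact: measurable_translate.
have mtS1 : measurable (translate S1 b) by exact: measurable_translate.
apply: (@le_trans _ _ (mu ((S1 `|` translate S1 b) `|` S3))).
  apply: le_measure; rewrite ?inE.
  - by apply: measurableD => //; exact: measurable_translate.
  - by apply: measurableU => //; exact: measurableU.
  move=> x [Bx nBx].
  have Kx : kbox (r0 + 1) x.
    move=> i; have := BK x Bx i; rewrite !tnth_mktuple; lra.
  have [Ux|nUx] := pselect (U x); last first.
    by left; left; split => //; left.
  have [Uxb|nUxb] := pselect (U (tsub x b)).
    left; right; split.
      move=> i; have := BK x Bx i; rewrite !tnth_mktuple ?tnth_tsub.
      have := hb2 i; have := ler_norm (tnth b i); have := ler_norm (- tnth b i).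
      rewrite normrN; lra.
    by right; split.
  by right; split => //; left; split.
have mU1 : measurable (S1 `|` translate S1 b) by apply: measurableU.
apply: le_trans (measureU2 _ mU1 mS3) _.
apply: le_trans (leeD (measureU2 _ mS1 mtS1) (lexx _)) _.
rewrite (_ : e = e / 3 + e / 3 + e / 3); last by field.
rewrite !EFinD; apply: leeD; first apply: leeD.
- exact: hU.
- change (mu (translate S1 b) <= (e / 3)%:E)%E.
  rewrite (mu_translate hlb b mS1); exact: hU.
- exact: hdel.
Qed.

Local Open Scope measure_scope.

Lemma cont_cara (A : set T) : A `<=` kbox r0 -> (mu^*).-caratheodory A ->
  forall e : R, 0 < e -> exists2 del : R, 0 < del & forall b : T,
    (forall i, `|tnth b i| < del) -> (mu^* (A `\` translate A b) <= e%:E)%E.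
Proof.
move=> AK hA e e0.
have rr : (0:R) < r0 := r00.
have e2 : 0 < e / 2 by lra.
have mK : measurable (kbox r0 : set T) by exact: measurable_kbox.
have Afin : mu^* A \is a fin_num.
  rewrite ge0_fin_numE; last exact: mu_ext_ge0.
  apply: le_lt_trans (le_mu_ext mu AK) _.
  rewrite measurable_mu_extE //; rewrite /kbox hlb; first exact: ltry.
  by move=> i; rewrite !tnth_mktuple; lra.
have [x [F [mF AF] <-] hx] := lb_ereal_inf_adherent e2 Afin.
set B := kbox r0 `&` \bigcup_k F k.
have mB : measurable B by apply: measurableI => //; exact: bigcupT_measurable.
have AB : A `<=` B by move=> y Ay; split; [exact: AK | exact: AF].
have muB : (mu B <= \sum_(k <oo) mu (F k))%E.
  by apply: measure_sigma_subadditive => //; apply: subIsetr.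
have hBA : (mu^* (B `&` ~` A) <= (e / 2)%:E)%E.
  have := hA B; rewrite (setIidr AB) measurable_mu_extE // => EB.
  rewrite -(leeD2lE _ _ Afin) -EB.
  by apply: le_trans muB _; apply: ltW.
have [del del0 hdel] := cont_meas (@subIsetl _ _ _) mB e2.
exists del => // b hb.
apply: (@le_trans _ _ (mu^* ((B `\` translate B b) `|` translate (B `&` ~` A) b))).
  apply: le_mu_ext => y [Ay nAy].
  have [Byb|nByb] := pselect (B (tsub y b)).
    by right; split.
  by left; split => //; exact: AB.
apply: le_trans (outer_measureU2 _ _ _) _.
rewrite (_ : e = e / 2 + e / 2); last by field.
rewrite EFinD; apply: leeD.
  change (mu^* (B `\` translate B b) <= (e / 2)%:E)%E.
  rewrite measurable_mu_extE; first exact: hdel.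
  by apply: measurableD => //; exact: measurable_translate.
change (mu^* (translate (B `&` ~` A) b) <= (e / 2)%:E)%E.
by rewrite mu_ext_translate.
Qed.

End S4.



Section S5.
Variables (R : realType) (d : nat).
Local Notation T := (d.-tuple R).
Variable mu : {measure set T -> \bar R}.
Hypothesis hlb : is_lebesgue mu.
Variable M : set T.
Hypothesis hP : torus_set M.
Hypothesis hM : leb_measurable mu M.
Local Notation D := (@fund_dom R d).
Local Open Scope measure_scope.

Lemma torus_E c : torus_set (M `\` translate M c).
Proof.
move=> x y H; split => -[h1 h2]; split.
- exact: (proj1 (hP H)).
- move=> h3; apply: h2; apply: (proj2 (hP (x := tsub x c) (y := tsub y c) _)) h3.
  by move=> i; have [k hk] := H i; exists k; rewrite !tnth_tsub -hk; ring.
- exact: (proj2 (hP H)).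
- move=> h3; apply: h2; apply: (proj1 (hP (x := tsub x c) (y := tsub y c) _)) h3.
  by move=> i; have [k hk] := H i; exists k; rewrite !tnth_tsub -hk; ring.
Qed.

Lemma Lam_sub b c : (Lambda mu M (tadd b c) <= Lambda mu M b + Lambda mu M c)%E.
Proof.
rewrite /Lambda.
apply: (@le_trans _ _ (mu^* ((D `&` (M `\` translate M b)) `|`
    (D `&` translate (M `\` translate M c) b)))).
  apply: le_mu_ext => x [Dx [Mx nMx]].
  have [Mxb|nMxb] := pselect (M (tsub x b)).
    right; split => //; split => // h; apply: nMx.
    rewrite /translate /=; congr M: h.
    by apply: eq_from_tnth => i; rewrite !tnth_mktuple; ring.
  by left; split => //; split.
apply: le_trans (outer_measureU2 _ _ _) _.
apply: leeD => //.
change (mu^* (D `&` translate (M `\` translate M c) b) <=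
        mu^* (D `&` (M `\` translate M c)))%E.
by rewrite periodic_inv //; exact: torus_E.
Qed.

Lemma Lam_fin b : Lambda mu M b \is a fin_num.
Proof.
have pi0 := pi_gt0 R.
rewrite ge0_fin_numE; last exact: mu_ext_ge0.
apply: (@le_lt_trans _ _ (mu^* (box (@tcube R d 0) (@tcube R d (2 * pi))))).
  apply: le_mu_ext => x [Dx _] i; rewrite !tnth_mktuple; exact: Dx.
rewrite measurable_mu_extE; last exact: measurable_box.
rewrite hlb; first exact: ltry.
by move=> i; rewrite !tnth_mktuple; lra.
Qed.

Lemma Lam0 a : Lambda mu M (tscale 0 a) = 0%E.
Proof.
rewrite /Lambda; have -> : M `\` translate M (tscale 0 a) = set0.
  apply/seteqP; split => x // [Mx]; apply.
  rewrite /translate /=; congr M: Mx.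
  by apply: eq_from_tnth => i; rewrite !tnth_mktuple; ring.
by rewrite setI0 mu_ext0.
Qed.

Lemma Lam_cont a : forall e : R, 0 < e -> exists2 del : R, 0 < del &
  forall t : R, `|t| < del -> (Lambda mu M (tscale t a) <= e%:E)%E.
Proof.
move=> e e0.
have pi0 := pi_gt0 R.
have r00 : (0:R) < 2 * pi + 1 by lra.
set A := M `&` kbox (2 * pi + 1).
have hA : (mu^*).-caratheodory A.
  apply: caratheodory_measurable_setI => //.
  apply: caratheodory_measurable_mu_ext; exact: measurable_kbox.
have [del1 del10 H] := cont_cara hlb r00 (@subIsetr _ _ _) hA e0.
set S := \sum_(i < d) `|tnth a i|.
have S0 : 0 <= S by apply: sumr_ge0 => i _.
exists (del1 / (S + 1)); first by apply: divr_gt0 => //; lra.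
move=> t ht.
apply: (@le_trans _ _ (mu^* (A `\` translate A (tscale t a)))); last first.
  apply: H => i; rewrite tnth_mktuple normrM.
  have hai : `|tnth a i| <= S.
    by rewrite /S (bigD1 i) //= lerDl sumr_ge0.
  rewrite ltr_pdivlMr in ht; last lra.
  apply: le_lt_trans ht; apply: ler_wpM2l => //; lra.
apply: le_mu_ext => x [Dx [Mx nMx]]; split.
  split => // i; have := Dx i; rewrite !tnth_mktuple; lra.
by move=> [].
Qed.

End S5.

Theorem mainTheorem5' (R : realType) (d : nat)
    (mu : {measure set (d.-tuple R) -> \bar R})
    (M : set (d.-tuple R)) (a : d.-tuple R) :
  is_lebesgue mu -> torus_set M -> leb_measurable mu M ->
  (0 < Lambda mu M a)%E ->
  exists c eps : R, 0 < c /\ 0 < eps /\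
    forall l : R, 0 < l -> l < eps -> ((c * l)%:E <= Lambda mu M (tscale l a))%E.
Proof.
move=> hlb hP hM hL.
pose lam t := fine (Lambda mu M (tscale t a)).
have lamE t : Lambda mu M (tscale t a) = (lam t)%:E by rewrite fineK // Lam_fin.
have lam0 t : 0 <= lam t by rewrite -lee_fin -lamE; exact: mu_ext_ge0.
have lamS s t : lam (s + t) <= lam s + lam t.
  rewrite -lee_fin EFinD -!lamE.
  have -> : tscale (s + t) a = tadd (tscale s a) (tscale t a).
    by apply: eq_from_tnth => i; rewrite !tnth_mktuple; ring.
  exact: Lam_sub.
have lamz : lam 0 = 0 by rewrite /lam Lam0.
have aE : a = tscale 1 a by apply: eq_from_tnth => i; rewrite !tnth_mktuple mul1r.
have l1 : 0 < lam 1 by rewrite -lte_fin -lamE -aE.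
have lamn (k : nat) t : lam (k%:R * t) <= k%:R * lam t.
  elim: k => [|k IH]; first by rewrite !mul0r lamz.
  rewrite -addn1 natrD mulrDl mul1r.
  apply: le_trans (lamS _ _) _; lra.
have e0 : 0 < lam 1 / 2 by lra.
have [del del0 Hc] := Lam_cont hlb hM a e0.
exists (lam 1 / 4), (Num.min del 1); split; first lra.
split; first by rewrite lt_min del0 ltr01.
move=> l l0 leps; rewrite lamE lee_fin.
rewrite leNgt; apply/negP => Hl.
have [ld l1'] : l < del /\ l < 1 by move: leps; rewrite lt_min => /andP[].
set n := Num.truncn l^-1.
have li : 0 < l^-1 by rewrite invr_gt0.
have /andP[n1 n2] := Num.Theory.truncn_itv (ltW li).
have hll : l * l^-1 = 1 by rewrite mulfV // gt_eqF.
have hn1 : n%:R * l <= 1 by nra.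
have hn2 : 1 < (n.+1)%:R * l by nra.
rewrite -addn1 natrD in hn2.
set rho := 1 - n%:R * l.
have hrho : `|rho| < del by rewrite /rho ger0_norm; lra.
have := Hc _ hrho; rewrite lamE lee_fin => hr.
have := lamS (n%:R * l) rho; rewrite (_ : n%:R * l + rho = 1); last by rewrite /rho; ring.
have := lamn n l.
have n0 : 0 <= n%:R :> R by [].
nra.
Qed.

Unset Implicit Arguments.
Set Strict Implicit.

Theorem mainTheorem5 (R : realType) (d : nat)
    (mu : {measure set (d.-tuple R) -> \bar R})
    (M : set (d.-tuple R)) (a : d.-tuple R) :
  is_lebesgue mu -> torus_set M -> leb_measurable mu M ->
  (0 < Lambda mu M a)%E ->
  exists c eps : R, 0 < c /\ 0 < eps /\
    forall l : R, 0 < l -> l < eps -> ((c * l)%:E <= Lambda mu M (tscale l a))%E.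
Proof. exact: mainTheorem5'. Qed.
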